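(* Let $(r_i)_{i\ge1}$ be a strictly increasing sequence in $|\mathbf{F}^\times|$ with $r_i\to\infty$. Suppose that for each $i$ we are given $g_i\in\mathcal{A}^m(r_i)$, and for each $i<j$ a unit $u_{i,j}$ of $\mathcal{A}^m(r_i)$ such that $g_i=u_{i,j}g_j$ in $\mathcal{A}^m(r_i)$. Then there exist an entire function $G$ on $\mathbf{F}^m$ and units $v_i$ of $\mathcal{A}^m(r_i)$ such that $g_i=Gv_i$ in $\mathcal{A}^m(r_i)$ for every $i$.
   Context: $\mathbf{F}$ is an algebraically closed field complete with respect to a non-trivial non-Archimedean absolute value; $|\mathbf{F}^\times|$ is its value group. For $r\in|\mathbf{F}^\times|$, $\mathcal{A}^m(r)$ is the ring of power series $\sum_\gamma a_\gamma z^\gamma$ over $\mathbf{F}$ in $z=(z_1,\dots,z_m)$ with $|a_\gamma|r^{|\gamma|}\to0$ as $|\gamma|\to\infty$; for $r<R$ an element of $\mathcal{A}^m(R)$ is regarded as an element of $\mathcal{A}^m(r)$ by restriction. An entire function on $\mathbf{F}^m$ is a power series lying in $\mathcal{A}^m(r)$ for all $r\in|\mathbf{F}^\times|$. *)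

(* Defs.v *)
(* To avoid the clash between
   the %R delimiters of ring_scope and R_scope, real-number operations are
   written with their function names (Rle, Rlt, Rmult, pow, ...). *)
From Stdlib Require Import Reals.
From HB Require Import structures.
From mathcomp Require Import all_boot all_order all_algebra.

Set Implicit Arguments.
Unset Strict Implicit.
Unset Printing Implicit Defensive.

Import GRing.Theory.
Local Open Scope ring_scope.

Definition nonarch_abs (F : fieldType) (abs : F -> R) : Prop :=
  (forall x : F, Rle R0 (abs x)) /\
  (forall x : F, abs x = R0 <-> x = 0) /\
  (forall x y : F, abs (x * y) = Rmult (abs x) (abs y)) /\
  (forall x y : F, Rle (abs (x + y)) (Rmax (abs x) (abs y))).

Definition nontrivial_abs (F : fieldType) (abs : F -> R) : Prop :=
  exists x : F, x <> 0 /\ abs x <> R1.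

Definition complete_abs (F : fieldType) (abs : F -> R) : Prop :=
  forall s : nat -> F,
    (forall eps : R, Rlt R0 eps -> exists N : nat, forall n p : nat,
        leq N (n) -> leq N (p) -> Rlt (abs (s n - s p)) eps) ->
    exists l : F, forall eps : R, Rlt R0 eps -> exists N : nat, forall n : nat,
        leq N (n) -> Rlt (abs (s n - l)) eps.

Definition in_value_group (F : fieldType) (abs : F -> R) (r : R) : Prop :=
  exists x : F, x <> 0 /\ abs x = r.

Definition mindex (m : nat) := {ffun 'I_m -> nat}.

Definition mdeg (m : nat) (g : mindex m) : nat := (\sum_(i < m) g i)%N.

Definition pseries (F : Type) (m : nat) := mindex m -> F.

Definition mle (m : nat) (a b : mindex m) : bool := [forall i, (a i <= b i)%N].
Definition msub (m : nat) (b a : mindex m) : mindex m := [ffun i => (b i - a i)%N].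

Definition mdivs (m : nat) (g : mindex m) : seq (mindex m) :=
  [seq a <- map (fun f : {ffun 'I_m -> 'I_(mdeg g).+1} =>
                  ([ffun i => nat_of_ord (f i)] : mindex m))
                (enum {: {ffun 'I_m -> 'I_(mdeg g).+1}}) | mle a g].

Definition pmul (F : fieldType) (m : nat) (f g : pseries F m) : pseries F m :=
  fun c => (\sum_(a <- mdivs c) f a * g (msub c a)).

Definition pone (F : fieldType) (m : nat) : pseries F m :=
  fun c => if mdeg c == 0%N then 1 else 0.

Definition in_A (F : fieldType) (abs : F -> R) (m : nat) (r : R)
    (f : pseries F m) : Prop :=
  forall eps : R, Rlt R0 eps -> exists N : nat, forall c : mindex m,
    leq N (mdeg c) -> Rlt (Rmult (abs (f c)) (pow r (mdeg c))) eps.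

Definition unit_A (F : fieldType) (abs : F -> R) (m : nat) (r : R)
    (u : pseries F m) : Prop :=
  in_A abs r u /\ exists w : pseries F m, in_A abs r w /\ pmul u w = @pone F m.

Definition entire (F : fieldType) (abs : F -> R) (m : nat) (f : pseries F m) : Prop :=
  forall r : R, in_value_group abs r -> in_A abs r f.

(* Main.v *)
Require Import Defs.
From Stdlib Require Import Reals Lra.
From mathcomp Require Import all_boot all_order all_algebra.
From Stdlib Require Import FunctionalExtensionality Classical ClassicalEpsilon.
Set Implicit Arguments.
Unset Strict Implicit.
Unset Printing Implicit Defensive.
Import GRing.Theory.

Lemma digits_lt K n (x : nat -> nat) : 0 < K -> (forall i, i < n -> x i < K) ->
  \sum_(i < n) x i * K ^ i < K ^ n.
Proof.
move=> HK; elim: n => [|n IH] H; first by rewrite big_ord0 expn0.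
rewrite big_ord_recr /= expnS.
have H1 : \sum_(i < n) x i * K ^ i < K ^ n by apply: IH => i Hi; apply: H; exact: ltnW.
have H2 : x n < K by apply: H.
apply: (@leq_trans (K ^ n + x n * K ^ n)); first by rewrite ltn_add2r.
rewrite -{1}(mul1n (K ^ n)) -mulnDl leq_mul2r; by rewrite add1n H2 orbT.
Qed.

Lemma digits_inj K n (x y : nat -> nat) : 0 < K ->
  (forall i, i < n -> x i < K) -> (forall i, i < n -> y i < K) ->
  \sum_(i < n) x i * K ^ i = \sum_(i < n) y i * K ^ i ->
  forall i, i < n -> x i = y i.
Proof.
move=> HK; elim: n => [|n IH] Hx Hy E i Hi //.
move: E; rewrite !big_ord_recr /= => E.
have Hx' : forall i, i < n -> x i < K by move=> j Hj; apply: Hx; exact: ltnW.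
have Hy' : forall i, i < n -> y i < K by move=> j Hj; apply: Hy; exact: ltnW.
have HKn : 0 < K ^ n by rewrite expn_gt0 HK.
have E2 : x n = y n.
  have := congr1 (fun t => t %/ K ^ n) E => /=.
  rewrite ![_ + _ * K ^ n]addnC !divnMDl //.
  by rewrite !divn_small ?addn0 //; apply: digits_lt.
move: E; rewrite E2 => /addIn E.
rewrite ltnS leq_eqVlt in Hi; case/orP: Hi => [/eqP ->|Hi] //.
exact: IH.
Qed.

Section Comb.
Variable m : nat.
Implicit Types a b c d : mindex m.

Definition z0 : mindex m := [ffun _ => 0%N].

Lemma mleP a b : reflect (forall i, a i <= b i)%N (mle a b).
Proof. exact: forallP. Qed.

Lemma mdeg_ge c i : (c i <= mdeg c)%N.
Proof. rewrite /mdeg (bigD1 i) //=; exact: leq_addr. Qed.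

Lemma mle_mdeg a c : mle a c -> (mdeg a <= mdeg c)%N.
Proof. move/mleP=> H; rewrite /mdeg; apply: leq_sum => i _; exact: H. Qed.

Definition emb K (f : {ffun 'I_m -> 'I_K}) : mindex m := [ffun i => nat_of_ord (f i)].

Lemma emb_inj K : injective (@emb K).
Proof.
move=> f1 f2 /ffunP H; apply/ffunP=> i; apply: val_inj; have := H i; by rewrite !ffunE.
Qed.

Lemma mem_mdivs a c : (a \in mdivs c) = mle a c.
Proof.
rewrite /mdivs mem_filter; case H: (mle a c) => //=.
apply/mapP.
have Hi : forall i, (a i < (mdeg c).+1)%N.
  move=> i; rewrite ltnS; apply: leq_trans (mdeg_ge c i); by move/mleP: H.
exists [ffun i => Ordinal (Hi i)]; first by rewrite mem_enum.
by apply/ffunP=> i; rewrite !ffunE.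
Qed.

Lemma uniq_mdivs c : uniq (mdivs c).
Proof.
rewrite /mdivs filter_uniq // map_inj_uniq ?enum_uniq //.
exact: (@emb_inj (mdeg c).+1).
Qed.

Lemma mdeg_msub a c : mle a c -> (mdeg a + mdeg (msub c a))%N = mdeg c.
Proof.
move/mleP=> H; rewrite /mdeg -big_split /=; apply: eq_bigr => i _.
by rewrite ffunE subnKC.
Qed.

Lemma mdeg0 c : (mdeg c == 0%N) = (c == z0).
Proof.
apply/idP/eqP => [|->]; last by rewrite /mdeg big1 // => i _; rewrite ffunE.
move=> H; apply/ffunP => i; rewrite ffunE; apply/eqP; rewrite -leqn0.
by rewrite -(eqP H) mdeg_ge.
Qed.

Lemma msub_id c : msub c c = z0.
Proof. by apply/ffunP=> i; rewrite !ffunE subnn. Qed.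

Lemma msub0 c : msub c z0 = c.
Proof. by apply/ffunP=> i; rewrite !ffunE subn0. Qed.

Lemma mle_refl c : mle c c.
Proof. by apply/mleP. Qed.

Lemma mle0 c : mle z0 c.
Proof. by apply/mleP=> i; rewrite ffunE. Qed.

Lemma mle_msub a c : mle (msub c a) c.
Proof. by apply/mleP=> i; rewrite ffunE leq_subr. Qed.

Lemma msubK a c : mle a c -> msub c (msub c a) = a.
Proof. move/mleP=> H; apply/ffunP=> i; rewrite !ffunE subKn //. Qed.

Lemma perm_mdivs_sub c : perm_eq (mdivs c) (map (msub c) (mdivs c)).
Proof.
apply: uniq_perm; first exact: uniq_mdivs.
  rewrite map_inj_in_uniq ?uniq_mdivs // => x y.
  rewrite !mem_mdivs => Hx Hy E.
  by rewrite -(msubK Hx) -(msubK Hy) E.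
move=> x; apply/idP/mapP.
  rewrite mem_mdivs => Hx; exists (msub c x); first by rewrite mem_mdivs mle_msub.
  by rewrite msubK.
by case=> y _ ->; rewrite mem_mdivs mle_msub.
Qed.

End Comb.

Local Open Scope ring_scope.

Section Alg.
Variable F : fieldType.
Variable m : nat.
Implicit Types f g h : pseries F m.
Implicit Types a b c d : mindex m.

Lemma pmul_comm f g : pmul f g = pmul g f.
Proof.
apply: functional_extensionality_dep => c.
rewrite /pmul (perm_big _ (perm_mdivs_sub c)) big_map.
apply: eq_big_seq => a; rewrite mem_mdivs => H; by rewrite msubK // mulrC.
Qed.

Definition sc (s : F) f : pseries F m := fun c => s * f c.

Lemma pmul_sc s t f g : pmul (sc s f) (sc t g) = sc (s * t) (pmul f g).
Proof.
apply: functional_extensionality_dep => c.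
rewrite /pmul /sc mulr_sumr; apply: eq_bigr => a _.
by rewrite mulrACA.
Qed.

Lemma pmul1l f : pmul (@pone F m) f = f.
Proof.
apply: functional_extensionality_dep => c.
rewrite /pmul /pone.
rewrite (bigD1_seq (z0 m)) ?uniq_mdivs ?mem_mdivs ?mle0 //=.
rewrite big_seq_cond big1 ?addr0.
  have -> : mdeg (z0 m) = 0%N by apply/eqP; rewrite mdeg0.
  by rewrite eqxx mul1r msub0.
move=> a /andP [_ Ha]; rewrite mdeg0 (negbTE Ha); exact: mul0r.
Qed.

Lemma pmul1r f : pmul f (@pone F m) = f.
Proof. by rewrite pmul_comm pmul1l. Qed.

Lemma pmulA f g h : pmul (pmul f g) h = pmul f (pmul g h).
Proof.
apply: functional_extensionality_dep => c.
rewrite /pmul.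
transitivity (\sum_(p <- [seq (a, b) | a <- mdivs c, b <- mdivs a])
   f p.2 * g (msub p.1 p.2) * h (msub c p.1)).
  rewrite big_allpairs_dep /=; apply: eq_bigr => a _; by rewrite mulr_suml.
transitivity (\sum_(p <- [seq (b, d) | b <- mdivs c, d <- mdivs (msub c b)])
   f p.1 * (g p.2 * h (msub (msub c p.1) p.2))); last first.
  rewrite big_allpairs_dep /=; apply: eq_bigr => a _; by rewrite mulr_sumr.
set P1 := [seq (a, b) | a <- mdivs c, b <- mdivs a].
set P2 := [seq (b, d) | b <- mdivs c, d <- mdivs (msub c b)].
pose phi := fun p : mindex m * mindex m => (p.2, msub p.1 p.2).
have uP1 : uniq P1.
  apply: allpairs_uniq_dep; first exact: uniq_mdivs.
    by move=> x _; exact: uniq_mdivs.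
  move=> [x1 y1] [x2 y2] _ _ /= [E1 E2]; subst; done.
have uP2 : uniq P2.
  apply: allpairs_uniq_dep; first exact: uniq_mdivs.
    by move=> x _; exact: uniq_mdivs.
  move=> [x1 y1] [x2 y2] _ _ /= [E1 E2]; subst; done.
have memP1 : forall p, (p \in P1) = (mle p.1 c && mle p.2 p.1).
  move=> [a b] /=; apply/allpairsPdep/andP.
    by case=> x [y [Hx Hy [-> ->]]]; rewrite -!mem_mdivs.
  by case=> Ha Hb; exists a, b; rewrite !mem_mdivs.
have memP2 : forall p, (p \in P2) = (mle p.1 c && mle p.2 (msub c p.1)).
  move=> [a b] /=; apply/allpairsPdep/andP.
    by case=> x [y [Hx Hy [-> ->]]]; rewrite -!mem_mdivs.
  by case=> Ha Hb; exists a, b; rewrite !mem_mdivs.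
have Hperm : perm_eq P2 (map phi P1).
  apply: uniq_perm => //.
    rewrite map_inj_in_uniq // => [[a1 b1] [a2 b2]].
    rewrite !memP1 /phi /= => /andP [_ /mleP H1] /andP [_ /mleP H2] [E1 E2].
    subst b2; congr pair; apply/ffunP => i.
    have := congr1 (fun x : mindex m => x i) E2; rewrite !ffunE => E.
    by rewrite -(subnK (H1 i)) E subnK.
  move=> [b d]; rewrite memP2 /=; apply/andP/mapP.
    case=> /mleP Hb /mleP Hd.
    exists ([ffun i => b i + d i]%N, b).
      rewrite memP1 /=; apply/andP; split; apply/mleP => i; rewrite ffunE.
        have := Hd i; rewrite ffunE; move: (Hb i).
        by move=> H1 H2; rewrite -(subnKC H1) leq_add2l.
      exact: leq_addr.
    rewrite /phi /=; congr pair; apply/ffunP => i; by rewrite !ffunE addKn.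
  case=> [[a b']] ; rewrite memP1 /phi /= => /andP [/mleP Ha /mleP Hb] [-> ->].
  split; apply/mleP => i; rewrite /msub ?ffunE; first exact: leq_trans (Hb i) (Ha i).
  by rewrite leq_sub2r.
rewrite (perm_big _ Hperm) big_map; apply: eq_big_seq => [[a b]].
rewrite memP1 /phi /= => /andP [/mleP Ha /mleP Hb].
rewrite mulrA; congr (_ * h _); apply/ffunP => i; rewrite !ffunE.
by rewrite subnBA // subnK // (leq_trans (Hb i) (Ha i)).
Qed.

Lemma pmul_z0 f g : pmul f g (z0 m) = f (z0 m) * g (z0 m).
Proof.
rewrite /pmul (bigD1_seq (z0 m)) ?uniq_mdivs ?mem_mdivs ?mle0 //= msub_id.
rewrite big_seq_cond big1 ?addr0 // => a /andP [Ha Hn].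
exfalso; move: Hn; rewrite mem_mdivs in Ha; case/negP; apply/eqP/ffunP => i.
by rewrite ffunE; apply/eqP; rewrite -leqn0; move/mleP: Ha => /(_ i); rewrite ffunE.
Qed.

End Alg.

Section Abs.
Variable F : fieldType.
Variable abs : F -> R.
Hypothesis Habs : nonarch_abs abs.

Lemma abs_ge0 x : Rle R0 (abs x).
Proof. by case: Habs. Qed.

Lemma abs_eq0 x : abs x = R0 <-> x = 0.
Proof. by case: Habs => _ [H _]. Qed.

Lemma absM x y : abs (x * y) = Rmult (abs x) (abs y).
Proof. by case: Habs => _ [_ [H _]]. Qed.

Lemma abs_ultra x y : Rle (abs (x + y)) (Rmax (abs x) (abs y)).
Proof. by case: Habs => _ [_ [_ H]]. Qed.

Lemma abs0 : abs 0 = R0.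
Proof. by apply/abs_eq0. Qed.

Lemma abs_gt0 x : x <> 0 -> Rlt R0 (abs x).
Proof.
move=> Hx; have := abs_ge0 x; case/Rle_lt_or_eq_dec => // E.
by exfalso; apply: Hx; apply/abs_eq0.
Qed.

Lemma abs1 : abs 1 = R1.
Proof.
have H := absM 1 1; rewrite mulr1 in H.
have H0 : Rlt R0 (abs 1) by apply: abs_gt0; apply/eqP; exact: oner_neq0.
nra.
Qed.

Lemma absN x : abs (- x) = abs x.
Proof.
have H := absM (-1) (-1); rewrite mulrNN mulr1 abs1 in H.
have H0 := abs_ge0 (-1).
have E : abs (-1) = R1 by nra.
by rewrite -mulN1r absM E Rmult_1_l.
Qed.

Lemma absB x y : abs (x - y) = abs (y - x).
Proof. by rewrite -absN opprB. Qed.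

Lemma absV x : x <> 0 -> abs (x^-1) = Rinv (abs x).
Proof.
move=> Hx; have H := absM x (x^-1); rewrite mulfV in H; last by apply/eqP.
rewrite abs1 in H; have := abs_gt0 Hx => H0.
apply: (Rmult_eq_reg_l (abs x)); last lra.
rewrite -H Rinv_r //; lra.
Qed.

Lemma abs_ultraB x y z : Rle (abs (x - z)) (Rmax (abs (x - y)) (abs (y - z))).
Proof. have -> : x - z = (x - y) + (y - z) by rewrite addrA subrK. exact: abs_ultra. Qed.

Lemma abs_add_eq x y : Rlt (abs y) (abs x) -> abs (x + y) = abs x.
Proof.
move=> H; have H1 := abs_ultra x y.
have H2 := abs_ultra (x + y) (- y); rewrite addrK absN in H2.
move: H1 H2; rewrite /Rmax; repeat case: Rle_dec; intros; lra.
Qed.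

Lemma sum_ultra (I : Type) (s : seq I) (G : I -> F) (K D : R) :
  Rle R0 K -> Rle R0 D ->
  (forall a, List.In a s -> Rle (Rmult (abs (G a)) K) D) ->
  Rle (Rmult (abs (\sum_(a <- s) G a)) K) D.
Proof.
move=> HK HD; elim: s => [|x s IH] H.
  by rewrite big_nil abs0 Rmult_0_l.
rewrite big_cons.
have H1 := abs_ultra (G x) (\sum_(a <- s) G a).
have H2 : Rle (Rmult (abs (G x)) K) D by apply: H; left.
have H3 : Rle (Rmult (abs (\sum_(a <- s) G a)) K) D by apply: IH => a Ha; apply: H; right.
apply: Rle_trans (Rmult_le_compat_r _ _ _ HK H1) _.
by rewrite /Rmax; case: Rle_dec.
Qed.

Lemma sum_ultra_lt (I : Type) (s : seq I) (G : I -> F) (D : R) :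
  Rlt R0 D ->
  (forall a, List.In a s -> Rlt (abs (G a)) D) ->
  Rlt (abs (\sum_(a <- s) G a)) D.
Proof.
move=> HD; elim: s => [|x s IH] H.
  by rewrite big_nil abs0.
rewrite big_cons.
have H1 := abs_ultra (G x) (\sum_(a <- s) G a).
have H2 : Rlt (abs (G x)) D by apply: H; left.
have H3 : Rlt (abs (\sum_(a <- s) G a)) D by apply: IH => a Ha; apply: H; right.
by apply: Rle_lt_trans H1 _; rewrite /Rmax; case: Rle_dec.
Qed.

End Abs.

Lemma In_mem (I : eqType) (a : I) (s : seq I) : List.In a s -> a \in s.
Proof. elim: s => //= x s IH [->|H]; rewrite inE ?eqxx //; by rewrite IH ?orbT. Qed.

Section Wt.
Variable F : fieldType.
Variable abs : F -> R.
Hypothesis Habs : nonarch_abs abs.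
Variable m : nat.
Implicit Types f g h : pseries F m.
Implicit Types a b c d : mindex m.

Definition wt (r : R) f c := Rmult (abs (f c)) (pow r (mdeg c)).

Lemma wt_ge0 r f c : Rle R0 r -> Rle R0 (wt r f c).
Proof. move=> Hr; apply: Rmult_le_pos; [exact: abs_ge0 | exact: pow_le]. Qed.

Lemma term_wt r f g a c : mle a c ->
  Rmult (abs (f a * g (msub c a))) (pow r (mdeg c)) = Rmult (wt r f a) (wt r g (msub c a)).
Proof.
move=> H; rewrite /wt absM // -(mdeg_msub H) pow_add; ring.
Qed.

Lemma pmul_bnd r f g A B : Rle R0 r -> Rle R0 A -> Rle R0 B ->
  (forall c, Rle (wt r f c) A) -> (forall c, Rle (wt r g c) B) ->
  forall c, Rle (wt r (pmul f g) c) (Rmult A B).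
Proof.
move=> Hr HA HB Hf Hg c; rewrite /wt /pmul.
apply: sum_ultra => //; [exact: pow_le | exact: Rmult_le_pos|].
move=> a /In_mem; rewrite mem_mdivs => Ha; rewrite term_wt //.
apply: Rmult_le_compat; try exact: wt_ge0; auto.
Qed.

Lemma near1 r f X B dl : Rle R0 r -> Rle R0 B -> Rle R0 dl ->
  (forall c, Rle (wt r f c) B) -> X (z0 m) = 1 ->
  (forall d, d <> z0 m -> Rle (wt r X d) dl) ->
  forall c, Rle (Rmult (abs (pmul f X c - f c)) (pow r (mdeg c))) (Rmult B dl).
Proof.
move=> Hr HB Hd Hf HX0 HX c; rewrite /pmul.
rewrite (bigD1_seq c) ?uniq_mdivs ?mem_mdivs ?mle_refl //= msub_id HX0 mulr1.
rewrite addrC addrK -big_filter.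
apply: sum_ultra => //; [exact: pow_le | exact: Rmult_le_pos|].
move=> a /In_mem; rewrite mem_filter mem_mdivs => /andP [Hne Ha]; rewrite term_wt //.
apply: Rmult_le_compat; try exact: wt_ge0; auto.
apply: HX => E; move/eqP: Hne; apply; apply/ffunP => i.
have := congr1 (fun x : mindex m => x i) E; rewrite /msub !ffunE => E'.
move/mleP: Ha => /(_ i) Hi.
by apply/eqP; rewrite eqn_leq Hi /= -subn_eq0 E'.
Qed.

End Wt.

Lemma list_bound (I : Type) (s : seq I) (w : I -> R) :
  exists B, Rle R0 B /\ forall a, List.In a s -> Rle (w a) B.
Proof.
elim: s => [|x s [B [HB H]]].
  by exists R0; split; [exact: Rle_refl | by []].
exists (Rmax B (w x)); split; first by apply: Rle_trans HB (Rmax_l _ _).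
move=> a [<-|Ha]; first exact: Rmax_r.
apply: Rle_trans (H a Ha) (Rmax_l _ _).
Qed.

Lemma list_argmax (I : Type) (s : seq I) (w : I -> R) (x0 : I) :
  List.In x0 s -> exists a, List.In a s /\ forall b, List.In b s -> Rle (w b) (w a).
Proof.
elim: s x0 => [//|x s IH] x0 Hx0.
case: (classic (exists y, List.In y s)) => [[y Hy]|Hn].
  have [a [Ha Hmax]] := IH y Hy.
  case: (Rle_dec (w x) (w a)) => Hc.
    exists a; split; first by right.
    by move=> b [<-|Hb] //; apply: Hmax.
  exists x; split; first by left.
  move=> b [<-|Hb]; first exact: Rle_refl.
  apply: Rle_trans (Hmax b Hb) _; lra.
exists x; split; first by left.
move=> b [<-|Hb]; first exact: Rle_refl.
by exfalso; apply: Hn; exists b.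
Qed.

Lemma mem_In (I : eqType) (a : I) (s : seq I) : a \in s -> List.In a s.
Proof. elim: s => //= x s IH; rewrite inE => /orP [/eqP ->|H]; [by left|right; exact: IH]. Qed.

Section InA.
Variable F : fieldType.
Variable abs : F -> R.
Hypothesis Habs : nonarch_abs abs.
Variable m : nat.
Implicit Types f g h : pseries F m.
Implicit Types a b c d : mindex m.

Definition Lst N := map (@emb m N) (enum {: {ffun 'I_m -> 'I_N}}).


Lemma in_Lst N c : (forall i, c i < N)%N -> c \in Lst N.
Proof.
move=> H; apply/mapP; exists [ffun i => Ordinal (H i)]; first by rewrite mem_enum.
by apply/ffunP=> i; rewrite !ffunE.
Qed.


Lemma deg_Lst N c : (mdeg c < N)%N -> c \in Lst N.
Proof. move=> H; apply: in_Lst => i; exact: leq_ltn_trans (mdeg_ge c i) H. Qed.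

Lemma inA_bounded r f : Rle R0 r -> in_A abs r f ->
  exists B, Rle R0 B /\ forall c, Rle (wt abs r f c) B.
Proof.
move=> Hr Hf; have [N HN] := Hf R1 Rlt_0_1.
have [B [HB HBs]] := list_bound (Lst N) (wt abs r f).
exists (Rmax R1 B); split; first by apply: Rle_trans (Rmax_l _ _); lra.
move=> c; case: (leqP N (mdeg c)) => Hc.
  apply: Rle_trans (Rmax_l _ _); apply: Rlt_le; exact: HN.
apply: Rle_trans (Rmax_r _ _); apply: HBs; apply: mem_In; exact: deg_Lst.
Qed.

Lemma inA_mono r r' f : Rle R0 r -> Rle r r' -> in_A abs r' f -> in_A abs r f.
Proof.
move=> Hr Hrr Hf eps He; have [N HN] := Hf eps He; exists N => c Hc.
apply: Rle_lt_trans (HN c Hc).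
apply: Rmult_le_compat_l; first exact: abs_ge0.
apply: pow_incr; lra.
Qed.

Lemma inA_sc r s f : Rle R0 r -> in_A abs r f -> in_A abs r (sc s f).
Proof.
move=> Hr Hf eps He.
have Hs := abs_ge0 Habs s.
set q := Rdiv eps (Rplus (abs s) R1).
have Hq : Rlt R0 q by apply: Rdiv_lt_0_compat => //; lra.
have Eq : eps = Rmult q (Rplus (abs s) R1) by rewrite /q; field; lra.
have [N HN] := Hf _ Hq; exists N => c Hc; rewrite /sc absM //.
have := HN c Hc; set t := Rmult (abs (f c)) _ => Ht.
have Ht0 : Rle R0 t by apply: Rmult_le_pos; [exact: abs_ge0| exact: pow_le].
rewrite Rmult_assoc -/t Eq; nra.
Qed.


Lemma inA_pone r : in_A abs r (@pone F m).
Proof.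
move=> eps He; exists 1%N => c Hc; rewrite /pone.
have -> : (mdeg c == 0%N) = false by case: (mdeg c) Hc.
by rewrite abs0 // Rmult_0_l.
Qed.

Lemma inA_mul r f g : Rle R0 r -> in_A abs r f -> in_A abs r g -> in_A abs r (pmul f g).
Proof.
move=> Hr Hf Hg eps He.
have [A [HA HAb]] := inA_bounded Hr Hf.
have [B [HB HBb]] := inA_bounded Hr Hg.
set e1 := Rdiv eps (Rmult 2 (Rplus B R1)).
set e2 := Rdiv eps (Rmult 2 (Rplus A R1)).
have He1 : Rlt R0 e1 by apply: Rdiv_lt_0_compat => //; lra.
have He2 : Rlt R0 e2 by apply: Rdiv_lt_0_compat => //; lra.
have E1 : eps = Rmult e1 (Rmult 2 (Rplus B R1)) by rewrite /e1; field; lra.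
have E2 : eps = Rmult e2 (Rmult 2 (Rplus A R1)) by rewrite /e2; field; lra.
have [N1 HN1] := Hf _ He1; have [N2 HN2] := Hg _ He2.
exists (N1 + N2)%N => c Hc.
apply: (@Rle_lt_trans _ (Rdiv eps 2)); last lra.
rewrite /pmul; apply: sum_ultra => //; [exact: pow_le | lra |].
move=> a /In_mem; rewrite mem_mdivs => Ha; rewrite (term_wt Habs) //.
have Hwa := wt_ge0 Habs f a Hr; have Hwb := wt_ge0 Habs g (msub c a) Hr.
have HAa := HAb a; have HBb' := HBb (msub c a).
have := mdeg_msub Ha => Es.
case: (leqP N1 (mdeg a)) => H1.
  have := HN1 a H1; rewrite -/(wt abs r f a) => Ht.
  have : Rle (Rmult (wt abs r f a) (wt abs r g (msub c a))) (Rmult e1 B) by apply: Rmult_le_compat; lra.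
  move=> H; apply: Rle_trans H _; rewrite E1; nra.
have H2 : (N2 <= mdeg (msub c a))%N.
  rewrite -(leq_add2l N1); apply: leq_trans Hc _; rewrite -Es leq_add2r; exact: ltnW.
have := HN2 _ H2; rewrite -/(wt abs r g (msub c a)) => Ht.
have : Rle (Rmult (wt abs r f a) (wt abs r g (msub c a))) (Rmult A e2) by apply: Rmult_le_compat; lra.
move=> H; apply: Rle_trans H _; rewrite E2; nra.
Qed.

End InA.

Section Phi.
Variable m : nat.
Implicit Types a b c d : mindex m.

Definition phi K c := (\sum_(i < m) c i * K ^ i)%N.
Definition madd a b : mindex m := [ffun i => (a i + b i)%N].

Lemma phi_add K a b : phi K (madd a b) = (phi K a + phi K b)%N.
Proof. rewrite /phi -big_split /=; apply: eq_bigr => i _; by rewrite ffunE mulnDl. Qed.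

Lemma phi_inj K a a' : (0 < K)%N -> (forall i, a i < K)%N -> (forall i, a' i < K)%N ->
  phi K a = phi K a' -> a = a'.
Proof.
move=> HK Ha Ha' E.
pose x := fun (c : mindex m) (i : nat) => oapp c 0%N (insub i).
have Ex : forall c, phi K c = (\sum_(i < m) x c i * K ^ i)%N.
  by move=> c; rewrite /phi; apply: eq_bigr => i _; rewrite /x valK.
have Hx : forall c, (forall i, c i < K)%N -> forall i, (i < m)%N -> (x c i < K)%N.
  by move=> c Hc i Hi; rewrite /x; case: insubP => [j _ _|] /=.
apply/ffunP => i.
have := @digits_inj K m (x a) (x a') HK (Hx _ Ha) (Hx _ Ha') _ i (ltn_ord i).
rewrite /x valK /=; apply; by rewrite -!Ex.
Qed.

Lemma phi_z0 K : phi K (z0 m) = 0%N.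
Proof. by rewrite /phi big1 // => i _; rewrite ffunE. Qed.

End Phi.

Lemma list_argmaxn (I : Type) (s : seq I) (w : I -> nat) (x0 : I) :
  List.In x0 s -> exists a, List.In a s /\ forall b, List.In b s -> (w b <= w a)%N.
Proof.
elim: s x0 => [//|x s IH] x0 Hx0.
case: (classic (exists y, List.In y s)) => [[y Hy]|Hn].
  have [a [Ha Hmax]] := IH y Hy.
  case: (leqP (w x) (w a)) => Hc.
    exists a; split; first by right.
    by move=> b [<-|Hb] //; apply: Hmax.
  exists x; split; first by left.
  move=> b [<-|Hb] //.
  apply: leq_trans (Hmax b Hb) _; exact: ltnW.
exists x; split; first by left.
move=> b [<-|Hb] //.
by exfalso; apply: Hn; exists b.
Qed.

Section Unit.
Variable F : fieldType.
Variable abs : F -> R.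
Hypothesis Habs : nonarch_abs abs.
Variable m : nat.
Implicit Types f g h : pseries F m.
Implicit Types a b c d : mindex m.

Lemma mdeg_z0 : mdeg (z0 m) = 0%N.
Proof. by apply/eqP; rewrite mdeg0. Qed.

Lemma wt_z0 r f : wt abs r f (z0 m) = abs (f (z0 m)).
Proof. by rewrite /wt mdeg_z0 /= Rmult_1_r. Qed.

Lemma max_exists r f : Rlt R0 r -> in_A abs r f -> f (z0 m) <> 0 ->
  exists N M, (0 < N)%N /\ Rlt R0 M /\ (forall c, Rle (wt abs r f c) M) /\
    (forall c, wt abs r f c = M -> (mdeg c < N)%N) /\
    (forall K, exists a, wt abs r f a = M /\
        forall a', wt abs r f a' = M -> (phi K a' <= phi K a)%N).
Proof.
move=> Hr Hf Hz.
have Hw0 := abs_gt0 Habs Hz.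
have [N HN] := Hf _ Hw0.
have HN0 : (0 < N)%N.
  case: N HN => // HN; have := HN (z0 m) (leq0n _); rewrite -/(wt abs r f (z0 m)) wt_z0; lra.
have Hz0 : List.In (z0 m) (Lst m N) by apply: mem_In; apply: deg_Lst; rewrite mdeg_z0.
have [a1 [Ha1 Hmax]] := list_argmax (wt abs r f) Hz0.
set M := wt abs r f a1.
have HM : Rle (abs (f (z0 m))) M by rewrite -(wt_z0 r); apply: Hmax.
have Hle : forall c, Rle (wt abs r f c) M.
  move=> c; case: (leqP N (mdeg c)) => Hc.
    have := HN c Hc; rewrite -/(wt abs r f c); lra.
  apply: Hmax; apply: mem_In; exact: deg_Lst.
have Hdeg : forall c, wt abs r f c = M -> (mdeg c < N)%N.
  move=> c Hc; case: (leqP N (mdeg c)) => // Hc'.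
  have := HN c Hc'; rewrite -/(wt abs r f c); lra.
exists N, M; split => //; split; first lra; split => //; split => // K.
pose S := [seq c <- Lst m N | if Req_EM_T (wt abs r f c) M then true else false].
have memS : forall c, wt abs r f c = M -> List.In c S.
  move=> c Hc; apply: mem_In; rewrite mem_filter; case: Req_EM_T => // _ /=.
  apply: deg_Lst; exact: Hdeg.
have [a [Ha Hamax]] := list_argmaxn (phi K) (memS a1 erefl).
exists a; split.
  move/In_mem: Ha; rewrite mem_filter; by case: Req_EM_T.
move=> a' Ha'; apply: Hamax; exact: memS.
Qed.


Lemma pone_z0 : @pone F m (z0 m) = 1.
Proof. by rewrite /pone mdeg_z0. Qed.

Lemma unit_lemma r u w : Rlt R0 r -> in_A abs r u -> in_A abs r w ->
  pmul u w = @pone F m ->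
  Rmult (abs (u (z0 m))) (abs (w (z0 m))) = R1 /\
  forall c, c <> z0 m -> Rlt (wt abs r u c) (abs (u (z0 m))).
Proof.
move=> Hr Hu Hw E.
have E0 : u (z0 m) * w (z0 m) = 1 by rewrite -pmul_z0 E pone_z0.
have Hu0 : u (z0 m) <> 0 by move=> H; move: E0; rewrite H mul0r => /eqP; rewrite eq_sym oner_eq0.
have Hw0 : w (z0 m) <> 0 by move=> H; move: E0; rewrite H mulr0 => /eqP; rewrite eq_sym oner_eq0.
split; first by rewrite -absM // E0 abs1.
have [Nu [Mu [HNu [HMu [Hleu [Hdegu Hargu]]]]]] := max_exists Hr Hu Hu0.
have [Nw [Mw [HNw [HMw [Hlew [Hdegw Hargw]]]]]] := max_exists Hr Hw Hw0.
set K := (Nu + Nw)%N.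
have HK : (0 < K)%N by rewrite /K addn_gt0 HNu.
have [a [Ha Hamax]] := Hargu K.
have [b [Hb Hbmax]] := Hargw K.
have Hua : forall c, wt abs r u c = Mu -> forall i, (c i < Nu)%N.
  move=> c Hc i; apply: leq_ltn_trans (mdeg_ge c i) _; exact: Hdegu.
have Hwb : forall c, wt abs r w c = Mw -> forall i, (c i < Nw)%N.
  move=> c Hc i; apply: leq_ltn_trans (mdeg_ge c i) _; exact: Hdegw.
set c := madd a b.
have Hac : mle a c by apply/mleP => i; rewrite ffunE leq_addr.
have Ecb : msub c a = b by apply/ffunP => i; rewrite !ffunE addKn.
have Hrc : Rlt R0 (pow r (mdeg c)) by apply: pow_lt.
have HT : Rmult (abs (u a * w b)) (pow r (mdeg c)) = Rmult Mu Mw.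
  by rewrite -{1}Ecb (term_wt Habs) // Ecb Ha Hb.
have Hrest : forall a', mle a' c -> a' <> a ->
    Rlt (Rmult (abs (u a' * w (msub c a'))) (pow r (mdeg c))) (Rmult Mu Mw).
  move=> a' Ha' Hne; rewrite (term_wt Habs) //.
  have H1 := Hleu a'; have H2 := Hlew (msub c a').
  have H3 := wt_ge0 Habs u a' (Rlt_le _ _ Hr).
  have H4 := wt_ge0 Habs w (msub c a') (Rlt_le _ _ Hr).
  case: (Req_EM_T (wt abs r u a') Mu) => Eu; last first.
    have : Rlt (wt abs r u a') Mu by lra.
    move=> H; apply: (@Rle_lt_trans _ (Rmult (wt abs r u a') Mw)); first by apply: Rmult_le_compat_l.
    exact: Rmult_lt_compat_r.
  case: (Req_EM_T (wt abs r w (msub c a')) Mw) => Ew; last first.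
    rewrite Eu; apply: Rmult_lt_compat_l => //; lra.
  exfalso; apply: Hne.
  have P1 := Hamax _ Eu; have P2 := Hbmax _ Ew.
  have Hsum : madd a' (msub c a') = c.
    apply/ffunP => i; rewrite /madd /msub !ffunE subnKC //; by move/mleP: Ha' => /(_ i); rewrite /c /madd ffunE.
  have := congr1 (phi K) Hsum; rewrite !phi_add => Ephi.
  have Eq : phi K a' = phi K a.
    apply/eqP; rewrite eqn_leq P1 /=.
    rewrite -(leq_add2r (phi K (msub c a'))) Ephi leq_add2l //.
  apply: phi_inj HK _ _ Eq.
    move=> i; move/mleP: Ha' => /(_ i); rewrite ffunE => Hi.
    apply: leq_ltn_trans Hi _; rewrite /K -addSn; apply: leq_add; [exact: Hua | apply: ltnW; exact: Hwb].
  move=> i; apply: leq_trans (Hua _ Ha i) _; exact: leq_addr.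
have Hc0 : c = z0 m.
  have Hpc : abs (pmul u w c) = abs (u a * w b).
    rewrite /pmul (bigD1_seq a) ?uniq_mdivs ?mem_mdivs //= Ecb.
    apply: (abs_add_eq Habs); rewrite -big_filter.
    apply: (sum_ultra_lt Habs).
      apply: (Rmult_lt_reg_r (pow r (mdeg c))) => //; rewrite Rmult_0_l HT.
      exact: Rmult_lt_0_compat.
    move=> a' /In_mem; rewrite mem_filter mem_mdivs => /andP [Hne Ha'].
    apply: (Rmult_lt_reg_r (pow r (mdeg c))) => //; rewrite HT.
    apply: Hrest => //; exact/eqP.
  apply/eqP; rewrite -mdeg0; apply/negP => /negP Hn.
  move: Hpc; rewrite E /pone (negbTE Hn) abs0 // => H.
  have : Rlt R0 (Rmult Mu Mw) by apply: Rmult_lt_0_compat.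
  rewrite -HT -H Rmult_0_l; lra.
have Ha0 : a = z0 m.
  apply/ffunP => i; have := congr1 (fun x : mindex m => x i) Hc0; rewrite !ffunE.
  by case: (a i).
move=> c' Hc'; rewrite -(wt_z0 r) -Ha0 Ha.
case: (Req_EM_T (wt abs r u c') Mu) => Eu; last by have := Hleu c'; lra.
exfalso; apply: Hc'.
have := Hamax _ Eu; rewrite Ha0 phi_z0 leqn0 => /eqP Ephi.
apply: phi_inj HK _ _ (etrans Ephi _) => [i|i|].
- apply: leq_trans (Hua _ Eu i) _; exact: leq_addr.
- by rewrite /z0 ffunE /K addn_gt0 HNu.
- by rewrite phi_z0.
Qed.

End Unit.

Section Cv.
Variable F : fieldType.
Variable abs : F -> R.
Hypothesis Habs : nonarch_abs abs.

Definition cv (s : nat -> F) (l : F) :=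
  forall eps, Rlt R0 eps -> exists N, forall n, (N <= n)%N -> Rlt (abs (s n - l)) eps.

Lemma cv_const x : cv (fun _ => x) x.
Proof. move=> eps He; exists 0%N => n _; by rewrite subrr abs0. Qed.

Lemma cv_unique s l1 l2 : cv s l1 -> cv s l2 -> l1 = l2.
Proof.
move=> H1 H2.
have Z : abs (l1 - l2) = R0.
  have H0 := abs_ge0 Habs (l1 - l2).
  apply: Rle_antisym => //; apply: Rnot_lt_le => Hlt.
  have [N1 HN1] := H1 _ Hlt; have [N2 HN2] := H2 _ Hlt.
  have A1 := HN1 (N1 + N2)%N (leq_addr _ _).
  have A2 := HN2 (N1 + N2)%N (leq_addl _ _).
  have H : Rle (abs (l1 - l2)) (Rmax (abs (s (N1 + N2)%N - l1)) (abs (s (N1 + N2)%N - l2))).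
    rewrite (absB Habs (s (N1 + N2)%N) l1); exact: abs_ultraB.
  have : Rlt (Rmax (abs (s (N1 + N2)%N - l1)) (abs (s (N1 + N2)%N - l2))) (abs (l1 - l2)).
    exact: Rmax_lub_lt.
  lra.
by move/(abs_eq0 Habs)/eqP: Z; rewrite subr_eq0 => /eqP.
Qed.

Lemma cv_shift s l i : cv s l -> cv (fun n => s (i + n)%N) l.
Proof.
move=> H eps He; have [N HN] := H _ He; exists N => n Hn; apply: HN.
exact: leq_trans Hn (leq_addl _ _).
Qed.

Lemma cv_add s t x y : cv s x -> cv t y -> cv (fun n => s n + t n) (x + y).
Proof.
move=> Hs Ht eps He.
have [N1 HN1] := Hs _ He; have [N2 HN2] := Ht _ He.
exists (N1 + N2)%N => n Hn.
have -> : s n + t n - (x + y) = (s n - x) + (t n - y).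
  by rewrite opprD addrACA.
apply: Rle_lt_trans (abs_ultra Habs _ _) _.
apply: Rmax_lub_lt; [apply: HN1 | apply: HN2]; apply: leq_trans _ Hn;
  [exact: leq_addr | exact: leq_addl].
Qed.

Lemma cv_mul s t x y : cv s x -> cv t y -> cv (fun n => s n * t n) (x * y).
Proof.
move=> Hs Ht eps He.
set X := abs x; set Y := abs y.
have HX : Rle R0 X by exact: abs_ge0.
have HY : Rle R0 Y by exact: abs_ge0.
set e1 := Rdiv eps (Rplus Y R1).
set e2 := Rmin R1 (Rdiv eps (Rplus X R1)).
have He1 : Rlt R0 e1 by apply: Rdiv_lt_0_compat; lra.
have He2 : Rlt R0 e2.
  apply: Rmin_pos; first lra; apply: Rdiv_lt_0_compat; lra.
have E1 : eps = Rmult e1 (Rplus Y R1) by rewrite /e1; field; lra.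
have He2' : Rle (Rmult e2 (Rplus X R1)) eps.
  have : Rle e2 (Rdiv eps (Rplus X R1)) by exact: Rmin_r.
  move=> H; apply: Rle_trans (Rmult_le_compat_r _ _ _ _ H) _; first lra.
  right; field; lra.
have He21 : Rle e2 R1 by exact: Rmin_l.
have [N1 HN1] := Hs _ He1; have [N2 HN2] := Ht _ He2.
exists (N1 + N2)%N => n Hn.
have A1 := HN1 n (leq_trans (leq_addr _ _) Hn).
have A2 := HN2 n (leq_trans (leq_addl _ _) Hn).
have -> : s n * t n - x * y = (s n - x) * t n + x * (t n - y).
  by rewrite mulrBl mulrBr addrA subrK.
apply: Rle_lt_trans (abs_ultra Habs _ _) _.
rewrite !(absM Habs) -/X.
have Htn : Rle (abs (t n)) (Rplus Y R1).
  have := abs_ultra Habs (t n - y) y; rewrite subrK -/Y.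
  rewrite /Rmax; case: Rle_dec; lra.
have G1 := abs_ge0 Habs (s n - x); have G2 := abs_ge0 Habs (t n - y).
have G3 := abs_ge0 Habs (t n).
apply: Rmax_lub_lt.
  apply: (@Rle_lt_trans _ (Rmult (abs (s n - x)) (Rplus Y R1))).
    exact: Rmult_le_compat_l.
  rewrite E1; apply: Rmult_lt_compat_r; lra.
apply: (@Rle_lt_trans _ (Rmult X e2)); first by apply: Rmult_le_compat_l; lra.
nra.
Qed.

Lemma cv_sum (I : Type) (s : seq I) (G : I -> nat -> F) (L : I -> F) :
  (forall a, cv (G a) (L a)) -> cv (fun n => \sum_(a <- s) G a n) (\sum_(a <- s) L a).
Proof.
move=> H; elim: s => [|x s IH].
  move=> eps He; exists 0%N => n _; by rewrite !big_nil subrr abs0.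
have := cv_add (H x) IH => H'.
move=> eps He; have [N HN] := H' _ He; exists N => n Hn.
by rewrite !big_cons; apply: HN.
Qed.


Variable m : nat.
Implicit Types f g h : pseries F m.

Lemma cv_pmul (fs gs : nat -> pseries F m) fl gl :
  (forall c, cv (fun n => fs n c) (fl c)) -> (forall c, cv (fun n => gs n c) (gl c)) ->
  forall c, cv (fun n => pmul (fs n) (gs n) c) (pmul fl gl c).
Proof.
move=> Hf Hg c; rewrite /pmul.
apply: (@cv_sum _ (mdivs c) (fun a n => fs n a * gs n (msub c a))) => a.
exact: cv_mul.
Qed.

Lemma limit_bound s l n N0 (dl : R) : cv s l ->
  (forall p, (N0 <= p)%N -> Rle (abs (s n - s p)) dl) -> Rle (abs (s n - l)) dl.
Proof.
move=> Hc Hb; apply: Rnot_lt_le => Hlt.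
have He : Rlt R0 (Rminus (abs (s n - l)) dl) by lra.
have [N HN] := Hc _ He.
have A1 := HN (N + N0)%N (leq_addr _ _).
have A2 := Hb (N + N0)%N (leq_addl _ _).
have H : Rle (abs (s n - l)) (Rmax (abs (s n - s (N + N0)%N)) (abs (s (N + N0)%N - l))).
  exact: abs_ultraB.
have A3 := abs_ge0 Habs (s n - s (N + N0)%N).
move: H; rewrite /Rmax; case: Rle_dec => _ H; lra.
Qed.

Lemma fchoice (A B : Type) (P : A -> B -> Prop) :
  (forall a, exists b, P a b) -> exists f : A -> B, forall a, P a (f a).
Proof.
move=> H; exists (fun a => proj1_sig (constructive_indefinite_description _ (H a))).
move=> a; exact: proj2_sig (constructive_indefinite_description _ (H a)).
Qed.

End Cv.

Section Sq.
Variable F : fieldType.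
Variable abs : F -> R.
Hypothesis Habs : nonarch_abs abs.
Variable m : nat.
Variable Rr : R.
Variable rho : nat -> R.
Variables S X : nat -> pseries F m.
Variable B : R.
Hypothesis HR : Rlt R0 Rr.
Hypothesis Hrho : forall n, Rle Rr (rho n).
Hypothesis Hmono : forall n p, (n <= p)%N -> Rle (rho n) (rho p).
Hypothesis HS : forall n, S n.+1 = pmul (S n) (X n).
Hypothesis HX0 : forall n, X n (z0 m) = 1.
Hypothesis HXd : forall n d, d <> z0 m -> Rle (wt abs Rr (X n) d) (Rdiv Rr (rho n)).
Hypothesis HB : Rle R0 B.
Hypothesis HS0 : forall c, Rle (wt abs Rr (S 0) c) B.

Let dl n := Rdiv Rr (rho n).

Lemma dl_pos n : Rlt R0 (dl n).
Proof. have := Hrho n; rewrite /dl => H; apply: Rdiv_lt_0_compat; lra. Qed.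

Lemma dl_le1 n : Rle (dl n) R1.
Proof.
have := Hrho n; rewrite /dl => H.
apply: (Rmult_le_reg_r (rho n)); first lra.
rewrite /Rdiv Rmult_assoc Rinv_l; lra.
Qed.

Lemma dl_mono n p : (n <= p)%N -> Rle (dl p) (dl n).
Proof.
move=> H; rewrite /dl /Rdiv; apply: Rmult_le_compat_l; first lra.
apply: Rinv_le_contravar; last exact: Hmono.
have := Hrho n; lra.
Qed.

Lemma seq_bnd n c : Rle (wt abs Rr (S n) c) B.
Proof.
elim: n c => [|n IH] c; first exact: HS0.
rewrite HS; rewrite -(Rmult_1_r B).
apply: (pmul_bnd Habs) => //; try lra.
move=> d; case: (eqVneq d (z0 m)) => [->|Hd].
  by rewrite wt_z0 HX0 abs1 //; lra.
apply: Rle_trans (HXd n (d:=d) _) (dl_le1 n); exact/eqP.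
Qed.


Lemma ultra_w (x y z : F) (K D : R) : Rle R0 K ->
  Rle (Rmult (abs (x - y)) K) D -> Rle (Rmult (abs (y - z)) K) D ->
  Rle (Rmult (abs (x - z)) K) D.
Proof.
move=> HK H1 H2.
have H : Rle (abs (x - z)) (Rmax (abs (x - y)) (abs (y - z))) by exact: abs_ultraB.
apply: Rle_trans (Rmult_le_compat_r _ _ _ HK H) _.
by rewrite /Rmax; case: Rle_dec.
Qed.

Lemma seq_step n c :
  Rle (Rmult (abs (S n.+1 c - S n c)) (pow Rr (mdeg c))) (Rmult B (dl n)).
Proof.
rewrite HS; apply: (near1 Habs) => //; first lra.
- exact: Rlt_le (dl_pos n).
- exact: seq_bnd.
- exact: HXd.
Qed.

Lemma seq_tel n k c :
  Rle (Rmult (abs (S (n + k)%N c - S n c)) (pow Rr (mdeg c))) (Rmult B (dl n)).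
Proof.
have Hp : Rle R0 (pow Rr (mdeg c)) by apply: pow_le; lra.
have Hd := dl_pos n.
elim: k => [|k IH].
  rewrite addn0 subrr abs0 // Rmult_0_l; apply: Rmult_le_pos; lra.
rewrite addnS; apply: (ultra_w (y := S (n + k)%N c)) => //.
apply: Rle_trans (seq_step _ c) _.
apply: Rmult_le_compat_l => //; apply: dl_mono; exact: leq_addr.
Qed.

Lemma seq_lim_bnd (L : pseries F m) : (forall c, cv abs (fun p => S p c) (L c)) ->
  forall n c, Rle (Rmult (abs (L c - S n c)) (pow Rr (mdeg c))) (Rmult B (dl n)).
Proof.
move=> HL n c.
have Hp : Rlt R0 (pow Rr (mdeg c)) by apply: pow_lt.
have E : Rmult B (dl n) = Rmult (Rdiv (Rmult B (dl n)) (pow Rr (mdeg c))) (pow Rr (mdeg c)).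
  field; lra.
rewrite E (absB Habs); apply: Rmult_le_compat_r; first lra.
apply: (limit_bound Habs (N0 := n) (HL c)) => p Hnp.
rewrite (absB Habs).
apply: (Rmult_le_reg_r (pow Rr (mdeg c))) => //; rewrite -E.
by have := seq_tel n (p - n) c; rewrite subnKC.
Qed.

Hypothesis Hinf : forall M, exists N, forall n, (N <= n)%N -> Rlt M (rho n).

Lemma small_dl eps : Rlt R0 eps -> exists N, forall n, (N <= n)%N -> Rlt (Rmult B (dl n)) eps.
Proof.
move=> He; have [N HN] := Hinf (Rdiv (Rmult B Rr) eps); exists N => n Hn.
have H := HN n Hn; have H1 := Hrho n.
rewrite /dl /Rdiv.
apply: (Rmult_lt_reg_r (rho n)); first lra.
rewrite Rmult_assoc Rmult_assoc Rinv_l ?Rmult_1_r; last lra.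
have : Rlt (Rmult B Rr) (Rmult eps (rho n)).
  have E : Rmult B Rr = Rmult eps (Rdiv (Rmult B Rr) eps) by field; lra.
  rewrite {1}E; apply: Rmult_lt_compat_l => //.
lra.
Qed.

Lemma seq_exists : complete_abs abs -> forall c, exists l, cv abs (fun p => S p c) l.
Proof.
move=> Hc c; apply: Hc => eps He.
have Hp : Rlt R0 (pow Rr (mdeg c)) by apply: pow_lt.
have [N HN] := small_dl (Rmult_lt_0_compat _ _ He Hp).
have Key : forall n p, (N <= n)%N -> (n <= p)%N -> Rlt (abs (S p c - S n c)) eps.
  move=> n p Hn Hnp.
  apply: (Rmult_lt_reg_r (pow Rr (mdeg c))) => //.
  apply: Rle_lt_trans (HN n Hn).
  by have := seq_tel n (p - n) c; rewrite subnKC.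
exists N => n p Hn Hp'; case: (leqP n p) => Hnp.
  rewrite (absB Habs); exact: Key.
apply: Key => //; exact: ltnW.
Qed.

Lemma seq_inA (L : pseries F m) : (forall n, in_A abs Rr (S n)) ->
  (forall c, cv abs (fun p => S p c) (L c)) -> in_A abs Rr L.
Proof.
move=> HSA HL eps He.
have [n Hn] := small_dl He.
have [N HN] := HSA n _ He.
exists N => c Hc.
have H := seq_lim_bnd HL n c.
have H2 := HN c Hc.
have H3 := Hn n (leqnn n).
have Hp : Rle R0 (pow Rr (mdeg c)) by apply: pow_le; lra.
have := ultra_w (x := L c) (y := S n c) (z := 0) Hp.
rewrite !subr0.
move=> Hu; apply: (@Rle_lt_trans _ (Rmax (Rmult B (dl n)) (Rmult (abs (S n c)) (pow Rr (mdeg c))))).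
  apply: Hu; [exact: Rle_trans H (Rmax_l _ _) | exact: Rmax_r].
exact: Rmax_lub_lt.
Qed.


Lemma seq_pack : complete_abs abs -> (forall n, in_A abs Rr (S n)) ->
  (forall c, exists l, cv abs (fun p => S p c) l) /\
  (forall L : pseries F m, (forall c, cv abs (fun p => S p c) (L c)) -> in_A abs Rr L).
Proof.
move=> Hc HSA; split; first exact: seq_exists.
move=> L HL; exact: seq_inA.
Qed.

End Sq.

Lemma scale_wt (F : fieldType) (abs : F -> R) (Habs : nonarch_abs abs) (m : nat)
  (Rr rh : R) (f : pseries F m) d :
  Rlt R0 Rr -> Rle Rr rh -> Rle (wt abs rh f d) R1 -> d <> z0 m ->
  Rle (wt abs Rr f d) (Rdiv Rr rh).
Proof.
move=> HR Hrh Hw Hd.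
have Hdeg : (0 < mdeg d)%N.
  rewrite lt0n mdeg0; exact/eqP.
set q := Rdiv Rr rh.
have Hq0 : Rle R0 q by rewrite /q; apply: Rlt_le; apply: Rdiv_lt_0_compat; lra.
have Hq1 : Rle q R1.
  apply: (Rmult_le_reg_r rh); first lra.
  rewrite /q /Rdiv Rmult_assoc Rinv_l; lra.
have ER : Rr = Rmult rh q by rewrite /q; field; lra.
have Hw0 := wt_ge0 Habs f d (Rlt_le _ _ (Rlt_le_trans _ _ _ HR Hrh)).
have Hqn : Rle (pow q (mdeg d)) q.
  case: (mdeg d) Hdeg => // n _ /=.
  have := pow_incr q R1 n (conj Hq0 Hq1); rewrite pow1 => H.
  have := pow_le q n Hq0 => H'.
  nra.
have E : wt abs Rr f d = Rmult (wt abs rh f d) (pow q (mdeg d)).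
  by rewrite /wt ER Rpow_mult_distr; ring.
rewrite E; have := pow_le q (mdeg d) Hq0 => H; nra.
Qed.

Section Main.
Variable F : fieldType.
Variable abs : F -> R.
Hypothesis Habs : nonarch_abs abs.
Hypothesis Hcompl : complete_abs abs.
Variable m : nat.
Variable r : nat -> R.
Hypothesis Hr_val : forall i : nat, in_value_group abs (r i).
Hypothesis Hr_incr : forall i j : nat, leq (S i) j -> Rlt (r i) (r j).
Hypothesis Hr_inf : forall M : R, exists N : nat, forall i : nat, leq N (i) -> Rlt M (r i).
Variable g : nat -> pseries F m.
Hypothesis Hg : forall i : nat, in_A abs (r i) (g i).
Variable U : nat -> pseries F m.
Hypothesis HU : forall k, in_A abs (r k) (U k).
Hypothesis HUeq : forall k, g k = pmul (U k) (g k.+1).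
Variable W : nat -> pseries F m.
Hypothesis HW : forall k, in_A abs (r k) (W k).
Hypothesis HUW : forall k, pmul (U k) (W k) = @pone F m.

Lemma r_pos i : Rlt R0 (r i).
Proof. have [x [Hx <-]] := Hr_val i; exact: abs_gt0. Qed.

Lemma r_mono i j : (i <= j)%N -> Rle (r i) (r j).
Proof.
rewrite leq_eqVlt => /orP [/eqP ->|H]; first exact: Rle_refl.
exact: Rlt_le (Hr_incr H).
Qed.

Lemma UW0 k : U k (z0 m) * W k (z0 m) = 1.
Proof. by rewrite -pmul_z0 HUW pone_z0. Qed.

Lemma U0_neq0 k : U k (z0 m) <> 0.
Proof. move=> H; have := UW0 k; rewrite H mul0r => /eqP; by rewrite eq_sym oner_eq0. Qed.

Lemma U_small k d : d <> z0 m -> Rlt (wt abs (r k) (U k) d) (abs (U k (z0 m))).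
Proof. have [_ H] := unit_lemma Habs (r_pos k) (HU k) (HW k) (HUW k); exact: H. Qed.

Lemma W_small k d : d <> z0 m -> Rlt (wt abs (r k) (W k) d) (abs (W k (z0 m))).
Proof.
have E : pmul (W k) (U k) = @pone F m by rewrite pmul_comm HUW.
have [_ H] := unit_lemma Habs (r_pos k) (HW k) (HU k) E; exact: H.
Qed.

Lemma UW0_abs k : Rmult (abs (U k (z0 m))) (abs (W k (z0 m))) = R1.
Proof. by rewrite -absM // UW0 abs1. Qed.

Fixpoint cc (k : nat) : F := match k with 0%N => 1 | k'.+1 => cc k' * U k' (z0 m) end.

Lemma cc_neq0 k : cc k <> 0.
Proof.
elim: k => [|k IH] /=; first by apply/eqP; exact: oner_neq0.
move/eqP; rewrite mulf_eq0 => /orP [/eqP H|/eqP H]; [exact: IH | exact: (U0_neq0 H)].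
Qed.

Definition Gk k := sc (cc k) (g k).
Definition Up k := sc (U k (z0 m))^-1 (U k).
Definition Ep k := sc (U k (z0 m)) (W k).

Lemma Up0 k : Up k (z0 m) = 1.
Proof. rewrite /Up /sc mulVf //; apply/eqP; exact: (@U0_neq0 k). Qed.

Lemma Ep0 k : Ep k (z0 m) = 1.
Proof. by rewrite /Ep /sc UW0. Qed.

Lemma Up_wt k d : d <> z0 m -> Rle (wt abs (r k) (Up k) d) R1.
Proof.
move=> Hd; have H := U_small k Hd.
have H0 := abs_gt0 Habs (@U0_neq0 k).
rewrite /wt /Up /sc absM // absV //; last exact: (@U0_neq0 k).
move: H; rewrite /wt => H.
apply: Rlt_le; apply: (Rmult_lt_reg_l (abs (U k (z0 m)))) => //.
rewrite -!Rmult_assoc Rinv_r ?Rmult_1_l ?Rmult_1_r //; lra.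
Qed.

Lemma Ep_wt k d : d <> z0 m -> Rle (wt abs (r k) (Ep k) d) R1.
Proof.
move=> Hd; have H := W_small k Hd.
have H0 := abs_gt0 Habs (@U0_neq0 k).
rewrite /wt /Ep /sc absM // -(UW0_abs k).
move: H; rewrite /wt => H.
apply: Rlt_le; rewrite Rmult_assoc; apply: Rmult_lt_compat_l => //.
Qed.

Lemma pmul_scl s (f h : pseries F m) : pmul (sc s f) h = sc s (pmul f h).
Proof.
apply: functional_extensionality => c; rewrite /pmul /sc mulr_sumr.
by apply: eq_bigr => a _; rewrite mulrA.
Qed.


Lemma sc1 (f : pseries F m) : sc 1 f = f.
Proof. by apply: functional_extensionality => c; rewrite /sc mul1r. Qed.

Lemma rel1 k : Gk k = pmul (Up k) (Gk k.+1).
Proof.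
rewrite /Gk /Up /= pmul_sc -HUeq; congr sc.
rewrite mulrCA mulVf ?mulr1 //; apply/eqP; exact: (@U0_neq0 k).
Qed.

Lemma rel2 k : pmul (Up k) (Ep k) = @pone F m.
Proof.
rewrite /Up /Ep pmul_sc HUW mulVf ?sc1 //; apply/eqP; exact: (@U0_neq0 k).
Qed.

Lemma rel3 k : Gk k.+1 = pmul (Gk k) (Ep k).
Proof.
by rewrite (rel1 k) [pmul (Up k) _]pmul_comm pmulA rel2 pmul1r.
Qed.

Fixpoint Vs i n := match n with 0%N => @pone F m | n'.+1 => pmul (Vs i n') (Up (i + n')) end.
Fixpoint Ws i n := match n with 0%N => @pone F m | n'.+1 => pmul (Ws i n') (Ep (i + n')) end.

Lemma rel4 i n : Gk i = pmul (Vs i n) (Gk (i + n)).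
Proof.
elim: n => [|n IH] /=; first by rewrite addn0 pmul1l.
by rewrite IH rel1 addnS pmulA.
Qed.

Lemma rel5 i n : pmul (Vs i n) (Ws i n) = @pone F m.
Proof.
elim: n => [|n IH] /=; first by rewrite pmul1l.
rewrite pmulA -[pmul (Up _) _]pmulA [pmul (Up _) (Ws i n)]pmul_comm pmulA -pmulA rel2 pmul1r.
by [].
Qed.


Lemma Hrho i n : Rle (r i) (r (i + n)%N).
Proof. apply: r_mono; exact: leq_addr. Qed.

Lemma Hmono i n p : (n <= p)%N -> Rle (r (i + n)%N) (r (i + p)%N).
Proof. by move=> H; apply: r_mono; rewrite leq_add2l. Qed.

Lemma Hinf i : forall M, exists N, forall n, (N <= n)%N -> Rlt M (r (i + n)%N).
Proof.
move=> M; have [N HN] := Hr_inf M; exists N => n Hn; apply: HN.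
exact: leq_trans Hn (leq_addl _ _).
Qed.

Lemma Gk_inA k : in_A abs (r k) (Gk k).
Proof. apply: (inA_sc Habs); [exact: Rlt_le (r_pos k) | exact: Hg]. Qed.

Lemma Up_inA k : in_A abs (r k) (Up k).
Proof. apply: (inA_sc Habs); [exact: Rlt_le (r_pos k) | exact: HU]. Qed.

Lemma Ep_inA k : in_A abs (r k) (Ep k).
Proof. apply: (inA_sc Habs); [exact: Rlt_le (r_pos k) | exact: HW]. Qed.

Lemma inA_lvl i n (f : pseries F m) : in_A abs (r (i + n)%N) f -> in_A abs (r i) f.
Proof. apply: (inA_mono Habs); [exact: Rlt_le (r_pos i) | exact: Hrho]. Qed.

Lemma Vs_inA i n : in_A abs (r i) (Vs i n).
Proof.
elim: n => [|n IH] /=; first exact: (inA_pone Habs).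
apply: (inA_mul Habs) => //; first exact: Rlt_le (r_pos i).
apply: (inA_lvl (n := n)); exact: Up_inA.
Qed.

Lemma Ws_inA i n : in_A abs (r i) (Ws i n).
Proof.
elim: n => [|n IH] /=; first exact: (inA_pone Habs).
apply: (inA_mul Habs) => //; first exact: Rlt_le (r_pos i).
apply: (inA_lvl (n := n)); exact: Ep_inA.
Qed.

Lemma pone_bnd i c : Rle (wt abs (r i) (@pone F m) c) R1.
Proof.
rewrite /wt /pone; case: eqP => [->|_]; first by rewrite abs1 //= Rmult_1_r; exact: Rle_refl.
rewrite abs0 // Rmult_0_l; lra.
Qed.

Lemma Up_lvl i n d : d <> z0 m -> Rle (wt abs (r i) (Up (i + n)%N) d) (Rdiv (r i) (r (i + n)%N)).
Proof. move=> Hd; apply: (scale_wt Habs) => //; [exact: r_pos | exact: Hrho | exact: Up_wt]. Qed.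

Lemma Ep_lvl i n d : d <> z0 m -> Rle (wt abs (r i) (Ep (i + n)%N) d) (Rdiv (r i) (r (i + n)%N)).
Proof. move=> Hd; apply: (scale_wt Habs) => //; [exact: r_pos | exact: Hrho | exact: Ep_wt]. Qed.

Lemma LG i : (forall c, exists l, cv abs (fun p => Gk (i + p)%N c) l) /\
  forall L : pseries F m, (forall c, cv abs (fun p => Gk (i + p)%N c) (L c)) ->
  in_A abs (r i) L.
Proof.
have [B [HB HBb]] := inA_bounded (Rlt_le _ _ (r_pos i)) (Gk_inA i).
apply: (@seq_pack F abs Habs m (r i) (fun n => r (i + n)%N) (fun n => Gk (i + n)%N)
  (fun n => Ep (i + n)%N) B (r_pos i) (Hrho i) (Hmono i)).
- by move=> n; rewrite addnS rel3.
- by move=> n; exact: Ep0.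
- by move=> n d Hd; exact: Ep_lvl.
- exact: HB.
- by move=> c; rewrite addn0.
- exact: Hinf.
- exact: Hcompl.
- move=> n; apply: (inA_lvl (n := n)); exact: Gk_inA.
Qed.

Lemma LV i : exists L : pseries F m, (forall c, cv abs (fun p => Vs i p c) (L c)) /\
  in_A abs (r i) L.
Proof.
have [H1 H2] : (forall c, exists l, cv abs (fun p => Vs i p c) l) /\
  forall L : pseries F m, (forall c, cv abs (fun p => Vs i p c) (L c)) -> in_A abs (r i) L.
  apply: (@seq_pack F abs Habs m (r i) (fun n => r (i + n)%N) (fun n => Vs i n)
    (fun n => Up (i + n)%N) R1 (r_pos i) (Hrho i) (Hmono i)).
  - by [].
  - by move=> n; exact: Up0.
  - by move=> n d Hd; exact: Up_lvl.
  - lra.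
  - move=> c; exact: pone_bnd.
  - exact: Hinf.
  - exact: Hcompl.
  - move=> n; exact: Vs_inA.
have [L HL] := fchoice H1.
by exists L; split => //; apply: H2.
Qed.

Lemma LW i : exists L : pseries F m, (forall c, cv abs (fun p => Ws i p c) (L c)) /\
  in_A abs (r i) L.
Proof.
have [H1 H2] : (forall c, exists l, cv abs (fun p => Ws i p c) l) /\
  forall L : pseries F m, (forall c, cv abs (fun p => Ws i p c) (L c)) -> in_A abs (r i) L.
  apply: (@seq_pack F abs Habs m (r i) (fun n => r (i + n)%N) (fun n => Ws i n)
    (fun n => Ep (i + n)%N) R1 (r_pos i) (Hrho i) (Hmono i)).
  - by [].
  - by move=> n; exact: Ep0.
  - by move=> n d Hd; exact: Ep_lvl.
  - lra.
  - move=> c; exact: pone_bnd.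
  - exact: Hinf.
  - exact: Hcompl.
  - move=> n; exact: Ws_inA.
have [L HL] := fchoice H1.
by exists L; split => //; apply: H2.
Qed.



Lemma main_sec : exists G : pseries F m, entire abs G /\
    exists v : nat -> pseries F m,
      forall i : nat, unit_A abs (r i) (v i) /\ g i = pmul G (v i).
Proof.
have [H0ex _] := LG 0.
have [G HG] := fchoice H0ex.
have HG' : forall c, cv abs (fun p => Gk p c) (G c) := HG.
have HGi : forall i c, cv abs (fun p => Gk (i + p)%N c) (G c).
  move=> i c; exact: (cv_shift i (HG' c)).
exists G; split.
  move=> r' [x [Hx Hrx]].
  have [N HN] := Hr_inf r'.
  apply: (inA_mono Habs (r' := r N)).
  - rewrite -Hrx; exact: abs_ge0.
  - apply: Rlt_le; exact: HN.
  - exact: (proj2 (LG N)) (HGi N).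
have [Vl HVl] := fchoice LV.
have [Wl HWl] := fchoice LW.
exists (fun i => sc (cc i)^-1 (Vl i)) => i.
have Hcc : cc i != 0 by apply/eqP; exact: cc_neq0.
split.
  split; first by apply: (inA_sc Habs); [exact: Rlt_le (r_pos i) | exact: (proj2 (HVl i))].
  exists (sc (cc i) (Wl i)); split.
    by apply: (inA_sc Habs); [exact: Rlt_le (r_pos i) | exact: (proj2 (HWl i))].
  rewrite pmul_sc mulVf // sc1.
  apply: functional_extensionality => c.
  have H := cv_pmul Habs (proj1 (HVl i)) (proj1 (HWl i)) c.
  have E : (fun n => pmul (Vs i n) (Ws i n) c) = (fun _ => @pone F m c).
    by apply: functional_extensionality => n; rewrite rel5.
  rewrite E in H; apply: (cv_unique Habs H); exact: cv_const.
have E : Gk i = pmul (Vl i) G.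
  apply: functional_extensionality => c.
  have H := cv_pmul Habs (proj1 (HVl i)) (HGi i) c.
  have E : (fun n => pmul (Vs i n) (Gk (i + n)%N) c) = (fun _ => Gk i c).
    by apply: functional_extensionality => n; rewrite -rel4.
  rewrite E in H; apply: (cv_unique Habs _ H); exact: cv_const.
have Eg : g i = sc (cc i)^-1 (Gk i).
  apply: functional_extensionality => c; by rewrite /sc /Gk /sc mulrA mulVf ?mul1r.
by rewrite Eg E -pmul_scl pmul_comm.
Qed.

End Main.

Local Close Scope ring_scope.

Theorem mainTheorem4
  (F : closedFieldType) (abs : F -> R)
  (Habs : nonarch_abs abs) (Hnontriv : nontrivial_abs abs) (Hcompl : complete_abs abs)
  (m : nat)
  (r : nat -> R)
  (Hr_val : forall i : nat, in_value_group abs (r i))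
  (Hr_incr : forall i j : nat, leq (S i) j -> Rlt (r i) (r j))
  (Hr_inf : forall M : R, exists N : nat, forall i : nat, leq N (i) -> Rlt M (r i))
  (g : nat -> pseries F m)
  (Hg : forall i : nat, in_A abs (r i) (g i))
  (u : nat -> nat -> pseries F m)
  (Hu_unit : forall i j : nat, leq (S i) j -> unit_A abs (r i) (u i j))
  (Hu_eq : forall i j : nat, leq (S i) j -> g i = pmul (u i j) (g j)) :
  exists G : pseries F m, entire abs G /\
    exists v : nat -> pseries F m,
      forall i : nat, unit_A abs (r i) (v i) /\ g i = pmul G (v i).
Proof.
have HU : forall k, in_A abs (r k) (u k k.+1).
  by move=> k; case: (Hu_unit k k.+1 (leqnn _)).
have HUeq : forall k, g k = pmul (u k k.+1) (g k.+1).
  by move=> k; apply: Hu_eq.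
have [W HW] : exists W : nat -> pseries F m, forall k,
    in_A abs (r k) (W k) /\ pmul (u k k.+1) (W k) = @pone F m.
  apply: (@fchoice nat (pseries F m) (fun k w => in_A abs (r k) w /\ pmul (u k k.+1) w = @pone F m)) => k.
  by case: (Hu_unit k k.+1 (leqnn _)).
exact: (@main_sec F abs Habs Hcompl m r Hr_val Hr_incr Hr_inf g Hg
  (fun k => u k k.+1) HU HUeq W (fun k => proj1 (HW k)) (fun k => proj2 (HW k))).
Qed.
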